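(* For every integer $p\ge1$ and every $s\in\mathbb{C}^k$, $$\nabla A(s)^p-A(s)^p\nabla+pA(s)^{p-1}=(-1)^{k-1}\partial_{s_k}\big(A(s)^p\big)\,P'_s(A(s)).$$
   Context: Fix an integer $k\ge 2$, coordinates $s=(s_1,\dots,s_k)$ on $\mathbb{C}^k$, $s_0:=1$, $P_s(z):=\sum_{h=0}^k(-1)^hs_hz^{k-h}$. $A(s)$ is the $(k,k)$ companion matrix with $A_{i,i+1}=1$ for $i\in[1,k-1]$, last row $A_{k,j}=(-1)^{k-j}s_{k+1-j}$ for $j\in[1,k]$, all other entries $0$. $P'_s(A(s)):=\sum_{h=0}^{k-1}(-1)^h(k-h)s_hA(s)^{k-h-1}$. $\nabla$ is the constant $(k,k)$ matrix with $\nabla_{i+1,i}=i$ for $i\in[1,k-1]$ and all other entries $0$. *)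

(* Defs.v *)
From mathcomp Require Import all_boot all_order all_algebra.
From mathcomp Require Import complex.
From mathcomp Require Import reals.
Set Implicit Arguments. Unset Strict Implicit. Unset Printing Implicit Defensive.
Import Order.TTheory GRing.Theory Num.Theory.
Local Open Scope ring_scope.

(* Coordinates: s = [:: s_1; ...; s_k] (a sequence of length k);
   scoord s h = s_h for 1 <= h <= k, and s_0 = 1. *)
Definition scoord (R : ringType) (s : seq R) (h : nat) : R := (1 :: s)`_h.

(* Companion matrix A(s), 0-based indices:
   A i (i+1) = 1 for i < k-1 ;  A (k-1) j = (-1)^(k-1-j) s_(k-j) ;  0 else.
   (1-based: A_{i,i+1} = 1, A_{k,j} = (-1)^{k-j} s_{k+1-j}.) *)
Definition companion (R : ringType) (k : nat) (s : seq R) : 'M[R]_k :=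
  \matrix_(i < k, j < k)
    if (i.+1 == j)%N then 1
    else if (i.+1 == k)%N then (-1) ^+ (k.-1 - j) * scoord s (k - j)
    else 0.

Definition Pderiv_at_A (R : comRingType) (k : nat) (s : seq R) : 'M[R]_k :=
  \sum_(h < k) (((-1) ^+ h * (k - h)%:R * scoord s h) *: (companion k s) ^+ (k - h).-1).

(* Nabla: 1-based nabla_{i+1,i} = i; 0-based nabla (j+1) j = j+1. *)
Definition nabla (R : ringType) (k : nat) : 'M[R]_k :=
  \matrix_(i < k, j < k) if (i == j.+1 :> nat)%N then (j.+1)%:R else 0.

(* Partial derivative with respect to the last coordinate s_k of a
   matrix-valued polynomial function F of s, evaluated at s:
   we replace s_k by the indeterminate 'X (keeping s_1..s_{k-1} fixed),
   differentiate each entry in 'X and evaluate at 'X = s_k. *)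
Definition partial_last (R : comRingType) (k : nat)
  (F : seq {poly R} -> 'M[{poly R}]_k) (s : seq R) : 'M[R]_k :=
  let sX := rcons (map polyC (take (size s).-1 s)) 'X in
  map_mx (fun q => (deriv q).[last 0 s]) (F sX).

(* Main.v *)
Require Import Defs.
From mathcomp Require Import all_boot all_order all_algebra.
From mathcomp Require Import complex.
From mathcomp Require Import reals.
From mathcomp Require Import zify ring.
Import GRing.Theory.
Local Open Scope ring_scope.

Lemma derivmx_mul (R : comNzRingType) n (M N : 'M[{poly R}]_n) :
  map_mx deriv (M *m N) = map_mx deriv M *m N + M *m map_mx deriv N.
Proof.
apply/matrixP=> i j; rewrite !mxE -big_split /= raddf_sum.
apply: eq_bigr => l _ /=. rewrite !mxE. exact: derivM.
Qed.

Lemma ev_mul (R : comNzRingType) (c : R) n (M N : 'M[{poly R}]_n) :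
  map_mx (horner_eval c) (M *m N) = map_mx (horner_eval c) M *m map_mx (horner_eval c) N.
Proof. exact: map_mxM. Qed.

Lemma ev_exp (R : comNzRingType) (c : R) n (M : 'M[{poly R}]_n) p :
  map_mx (horner_eval c) (M ^+ p) = (map_mx (horner_eval c) M) ^+ p.
Proof.
elim: p => [|p IH]; first by rewrite !expr0 map_mx1.
by rewrite !exprSr -!mulmxE ev_mul IH.
Qed.

Lemma step_gen (Rg : pzRingType) (N A X Y : Rg) p :
  N*A - A*N + 1 = X -> Y = N*A^+p - A^+p*N + A^+p.-1 *+ p ->
  N*A^+p.+1 - A^+p.+1*N + A^+p *+ p.+1 = Y*A + A^+p*X.
Proof.
move=> <- ->.
have E : A ^+ p.-1 *+ p * A + A ^+ p = A ^+ p *+ p.+1.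
  case: p => [|p] /=; first by rewrite mulr0n mul0r add0r.
  by rewrite mulrnAl -exprSr [RHS]mulrSr.
rewrite -E !mulrDl !mulrDr ?mulNr ?mulrN !mulrA -!exprSr mulr1 -[N * A ^+ p * A]mulrA -exprSr.
by rewrite [RHS]addrACA; congr (_ + _); rewrite addrA subrK.
Qed.

Lemma sum_pick (R : nzSemiRingType) n (F : 'I_n.+1 -> R) m :
  \sum_(l < n.+1) (if (l == m :> nat) then F l else 0) = if (m < n.+1)%N then F (inord m) else 0.
Proof.
case: ltnP => hm.
  rewrite (bigD1 (inord m)) /= ?inordK ?eqxx // big1 ?addr0 // => l /negbTE hl.
  case: eqP => // e; move: hl; rewrite -e inord_val eqxx //.
by rewrite big1 // => l _; case: eqP => // e; move: (ltn_ord l); rewrite e ltnNge hm.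
Qed.
Lemma compA_row0 (R : comNzRingType) n (s : seq R) m (hm : (m < n.+2)%N) (j : 'I_n.+2) :
  (companion n.+2 s ^+ m) ord0 j = (j == m :> nat)%:R.
Proof.
elim: m hm j => [|m IH] hm j; first by rewrite expr0 mxE eq_sym.
rewrite exprSr -mulmxE mxE.
rewrite (eq_bigr (fun l : 'I_n.+2 => if (l == m :> nat) then companion n.+2 s l j else 0)); last first.
  by move=> l _; rewrite IH ?(ltnW hm) //; case: eqP => _; rewrite ?mul1r ?mul0r.
rewrite sum_pick (ltnW hm) mxE inordK ?(ltnW hm) // eq_sym.
by case: eqP => // _; rewrite (ltn_eqF hm).
Qed.
Lemma P_row0 (R : comNzRingType) n (s : seq R) (j : 'I_n.+2) :
  Pderiv_at_A n.+2 s ord0 j =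
  (-1) ^+ (n.+1 - j)%N * (n.+2 - (n.+1 - j))%:R * scoord s (n.+1 - j)%N.
Proof.
rewrite /Pderiv_at_A summxE.
rewrite (eq_bigr (fun h : 'I_n.+2 => if (h == (n.+1 - j)%N :> nat) then
   (-1) ^+ h * (n.+2 - h)%:R * scoord s h else 0)); last first.
  move=> h _; rewrite mxE compA_row0; last by case: h => h hh /=; lia.
  have -> : (j == (n.+2 - h).-1 :> nat) = (h == (n.+1 - j)%N :> nat).
    by case: h => h hh; case: j => j hj /=; apply/eqP/eqP; lia.
  by case: eqP => _; rewrite ?mulr1 ?mulr0.
rewrite sum_pick; case: ifP => H; last by case: j H => j hj /=; lia.
by rewrite inordK.
Qed.
Lemma NA_entry (R : comNzRingType) n (s : seq R) (i j : 'I_n.+2) :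
  (nabla R n.+2 *m companion n.+2 s) i j =
  if (0 < i)%N then (i : nat)%:R * companion n.+2 s (inord i.-1) j else 0.
Proof.
rewrite mxE; case: i => [[|i] hi] /=.
  by rewrite big1 // => l _; rewrite mxE /= mul0r.
rewrite (eq_bigr (fun l : 'I_n.+2 => if (l == i :> nat) then i.+1%:R * companion n.+2 s l j else 0)).
  by rewrite sum_pick (ltnW hi).
move=> l _; rewrite mxE /= eqSS [(l == i :> nat)]eq_sym; by case: eqP => [->|_]; rewrite ?mul0r.
Qed.

Lemma AN_entry (R : comNzRingType) n (s : seq R) (i j : 'I_n.+2) :
  (companion n.+2 s *m nabla R n.+2) i j =
  if (j.+1 < n.+2)%N then companion n.+2 s i (inord j.+1) * j.+1%:R else 0.
Proof.
rewrite mxE.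
rewrite (eq_bigr (fun l : 'I_n.+2 => if (l == j.+1 :> nat) then companion n.+2 s i l * j.+1%:R else 0)).
  by rewrite sum_pick.
by move=> l _; rewrite [nabla _ _ l j]mxE; case: ifP => _; rewrite ?mulr0.
Qed.
Lemma comm_id (R : comNzRingType) n (s : seq R) :
  nabla R n.+2 *m companion n.+2 s - companion n.+2 s *m nabla R n.+2 + 1%:M
  = delta_mx ord_max ord0 *m Pderiv_at_A n.+2 s.
Proof.
apply/matrixP => i j.
have -> : (delta_mx ord_max ord0 *m Pderiv_at_A n.+2 s) i j =
    (i == n.+1 :> nat)%:R * Pderiv_at_A n.+2 s ord0 j.
  rewrite mxE (eq_bigr (fun l : 'I_n.+2 => if (l == 0%N :> nat) then
       (i == n.+1 :> nat)%:R * Pderiv_at_A n.+2 s l j else 0)).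
    by rewrite sum_pick /=; congr (_ * Pderiv_at_A _ _ _ _); apply/val_inj; rewrite /= inordK.
  move=> l _; rewrite mxE; case: (l == 0 :> nat) /eqP => [l0|ln0].
    have -> : l = ord0 by apply/val_inj.
    by rewrite eqxx andbT.
  have -> : (l == ord0) = false by apply/negbTE/eqP => e; apply: ln0; rewrite e.
  by rewrite andbF mul0r.
rewrite [LHS]mxE [X in X + _ = _]mxE [X in _ + X + _ = _]mxE [1%:M i j]mxE NA_entry AN_entry P_row0.
rewrite -val_eqE; case: i => i hi; case: j => j hj /=.
have [Hi|Hi] : i = n.+1 \/ (i < n.+1)%N by lia.
  subst i; rewrite /= ?eqxx ?mul1r [companion _ _ (inord n) _]mxE inordK //= (@ltn_eqF n.+1 n.+2) //.
  have [Hj|Hj] : j = n.+1 \/ (j < n.+1)%N by lia.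
    subst j; rewrite ltnn eqxx subnn subn0 /= expr0 mul1r mulr1 subr0 mulr1.
    by rewrite natr1.
  have Hj' : (j.+1 < n.+2)%N by lia.
  rewrite Hj' mxE inordK // (gtn_eqF Hj) /= eqxx.
  have E1 : (n.+1 - j)%N = (n - j).+1 by lia.
  have E2 : (n.+2 - (n - j).+1)%N = j.+1 by lia.
  have E3 : (n.+1 - j.+1)%N = (n - j)%N by lia.
  have E4 : (n.+2 - j.+1)%N = (n - j).+1 by lia.
  rewrite E1 E2 E3 E4 exprS (gtn_eqF Hj'); ring.
rewrite (ltn_eqF Hi) mul0r.
have T1 : (if (0 < i)%N then i%:R * companion n.+2 s (inord i.-1) (Ordinal hj) else 0)
    = (i == j)%:R * i%:R.
  case: i hi Hi => [|i] hi Hi /=; first by rewrite mulr0.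
  rewrite mxE inordK /=; last by lia.
  rewrite (ltn_eqF hi).
  by case: eqP => _; rewrite ?mul1r ?mul0r ?mulr1 ?mulr0.
have T2 : (if (j.+1 < n.+2)%N then companion n.+2 s (Ordinal hi) (inord j.+1) * j.+1%:R else 0)
    = (i == j)%:R * j.+1%:R.
  case: ifP => Hj'.
    rewrite mxE inordK //= eqSS (@ltn_eqF i.+1 n.+2 Hi).
    by case: eqP => _; rewrite ?mul1r ?mul0r.
  case: eqP => E; last by rewrite mul0r.
  by exfalso; move: Hj'; rewrite -E; lia.
rewrite T1 T2; case: eqP => [<-|_]; last by rewrite !mul0r subrr addr0.
by rewrite !mul1r -natr1 /= opprD addrA subrr sub0r addNr.
Qed.


Lemma nth_map0 (R1 R2 : nzRingType) (f : R1 -> R2) (t : seq R1) h :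
  f 0 = 0 -> f (nth 0 t h) = nth 0 (map f t) h.
Proof.
move=> f0; elim: t h => [|x t IH] [|h] //=; by rewrite f0.
Qed.

Lemma sX_ev (R : comNzRingType) (s : seq R) n (hs : size s = n.+2) :
  map (horner_eval (last 0 s)) (rcons (map polyC (take (size s).-1 s)) 'X) = s.
Proof.
case/lastP: s hs => [|t x] // hs.
have -> : take (size (rcons t x)).-1 (rcons t x) = t by rewrite size_rcons /= -cats1 take_size_cat.
rewrite map_rcons -map_comp last_rcons /=.
rewrite horner_evalE hornerX (eq_map (g := id)) ?map_id // => y /=.
by rewrite horner_evalE hornerC.
Qed.

Lemma F1 (R : comNzRingType) (s : seq R) n (hs : size s = n.+2) :
  map_mx (horner_eval (last 0 s))
    (companion n.+2 (rcons (map polyC (take (size s).-1 s)) 'X)) = companion n.+2 s.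
Proof.
apply/matrixP => i j; rewrite !mxE.
case: ifP => _; first by rewrite rmorph1.
case: ifP => _; last by rewrite rmorph0.
rewrite rmorphM rmorph_sign /scoord -[in RHS](@sX_ev _ s n hs).
congr (_ * _).
have H := @nth_map0 _ _ (horner_eval (last 0 s))
  (1 :: rcons [seq i%:P | i <- take (size s).-1 s] 'X) (n.+2 - j) (rmorph0 _).
rewrite /= rmorph1 in H; exact: H.
Qed.

Lemma deriv1 (R : comNzRingType) : deriv (1 : {poly R}) = 0.
Proof. by rewrite -polyC1 derivC. Qed.
Lemma deriv0 (R : comNzRingType) : deriv (0 : {poly R}) = 0.
Proof. by rewrite -polyC0 derivC. Qed.
Lemma deriv_sign (R : comNzRingType) e : deriv ((-1) ^+ e : {poly R}) = 0.
Proof. by rewrite deriv_exp derivN deriv1 oppr0 mul0r mul0rn. Qed.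

Lemma deriv_sX (R : comNzRingType) (s : seq R) n (hs : size s = n.+2) h :
  deriv (nth 0 (rcons (map polyC (take (size s).-1 s)) 'X) h) = (h == n.+1)%:R.
Proof.
rewrite nth_rcons size_map size_take hs /= ltnSn.
case: ltnP => H1.
  rewrite -(@nth_map0 _ _ polyC) ?polyC0 // derivC (ltn_eqF H1) //.
case: eqP => [_|_]; first by rewrite derivX.
by rewrite deriv0.
Qed.

Lemma F2 (R : comNzRingType) (s : seq R) n (hs : size s = n.+2) :
  map_mx (horner_eval (last 0 s))
    (map_mx deriv (companion n.+2 (rcons (map polyC (take (size s).-1 s)) 'X)))
  = (-1) ^+ n.+1 *: delta_mx ord_max ord0.
Proof.
apply/matrixP => i j; rewrite !mxE.
case: ifP => H1.
  rewrite deriv1 rmorph0.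
  have -> : (j == ord0) = false.
    by apply/negbTE; apply/eqP => e; move: H1; rewrite e.
  by rewrite andbF mulr0.
case: ifP => H2.
  have -> : (i == ord_max) = true by apply/eqP/val_inj => /=; move/eqP: H2 => [->].
  rewrite derivM deriv_sign mul0r add0r /scoord.
  have -> : (n.+2 - j)%N = (n.+1 - j).+1 by case: j {H1} => j hj /=; lia.
  rewrite /= (@deriv_sX _ s n hs) rmorphM rmorph_sign rmorph_nat.
  case: j {H1} => [[|j] hj] /=; first by rewrite subn0 eqxx.
  have -> : (n.+1 - j.+1 == n.+1)%N = false by apply/negbTE; lia.
  by rewrite !mulr0.
rewrite deriv0 rmorph0.
have -> : (i == ord_max) = false.
  apply/negbTE/eqP => e; move: H2; rewrite e /= eqxx //.
by rewrite mulr0.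
Qed.

Lemma PA_comm (R : comNzRingType) n (s : seq R) :
  Pderiv_at_A n.+2 s * companion n.+2 s = companion n.+2 s * Pderiv_at_A n.+2 s.
Proof.
rewrite /Pderiv_at_A mulr_suml mulr_sumr; apply: eq_bigr => h _.
by rewrite -scalerAl -scalerAr -exprSr exprS.
Qed.

Lemma fin_step (R : comNzRingType) m (T A E P : 'M[R]_m.+1) (sg : R) p :
  sg * sg = 1 -> P * A = A * P ->
  sg *: (T * P) * A + A ^+ p * (E * P) = sg *: ((T * A + A ^+ p * (sg *: E)) * P).
Proof.
move=> hsg hPA.
rewrite mulrDl scalerDr -[T * A * P]mulrA -hPA mulrA -scalerAl.
congr (_ + _); first by rewrite -!mulmxE mulmxA.
by rewrite -!mulmxE -scalemxAr -scalemxAl scalerA hsg scale1r.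
Qed.

Theorem mainTheorem9 (R : realType) (k : nat) (hk : (2 <= k)%N)
  (p : nat) (hp : (1 <= p)%N) (s : seq R[i]) (hs : size s = k) :
  nabla R[i] k *m (companion k s) ^+ p - (companion k s) ^+ p *m nabla R[i] k
    + p%:R *: (companion k s) ^+ p.-1
  = (-1) ^+ k.-1 *:
      (partial_last (fun t : seq {poly R[i]} => (companion k t) ^+ p) s
       *m Pderiv_at_A k s).
Proof.
case: k hk hs => [|[|n]] // _ hs.
rewrite /partial_last.
set c := last 0 s.
set sX := rcons _ 'X.
have -> : map_mx (fun q => q^`().[c]) (companion n.+2 sX ^+ p)
    = map_mx (horner_eval c) (map_mx deriv (companion n.+2 sX ^+ p)).
  by apply/matrixP => i j; rewrite !mxE horner_evalE.
have HA := @F1 _ s n hs; have HD := @F2 _ s n hs.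
have HC := @comm_id _ n s; have HPA := @PA_comm _ n s.
rewrite -/c -/sX in HA HD.
set A := companion n.+2 s in HA HC HPA *.
set B := companion n.+2 sX in HA HD *.
set P := Pderiv_at_A n.+2 s in HC HPA *.
set N := nabla R[i] n.+2 in HC *.
set ev := map_mx (horner_eval c) in HA HD *.
rewrite scaler_nat /= !mulmxE; rewrite !mulmxE in HC.
clear hp; elim: p => [|p IH].
  rewrite !expr0 mulr1 mul1r subrr mulr0n addr0.
  have -> : ev (map_mx deriv (1 : 'M[{poly R[i]}]_n.+2)) = 0.
    apply/matrixP => i j; rewrite !mxE; case: (i == j) => /=;
      by rewrite ?mulr1n ?mulr0n ?deriv1 ?deriv0 rmorph0.
  by rewrite mul0r scaler0.
rewrite /= (@step_gen _ N A _ _ p HC (erefl _)) IH.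
have -> : B ^+ p.+1 = B ^+ p *m B by rewrite exprSr mulmxE.
rewrite derivmx_mul /ev map_mxD !ev_mul ev_exp -/ev HA HD !mulmxE.
apply: fin_step; last exact: HPA.
by rewrite -exprMn mulrNN mulr1 expr1n.
Qed.
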